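(* Let $H=\sum_{(i,j)\in E}h_{i,j}$ be a $2$-local Hamiltonian on $n$ qubits, where each $h_{i,j}$ is Hermitian and acts nontrivially only on qubits $i,j$, and for each pair $\{i,j\}$ there is at most one term $h_{i,j}$. For each $i\in[n]$ let $\eta_i>0$, $\kappa_i\ge 0$ be parameters, and let $\mathcal P_i$ be either the identity superoperator on qubit $i$ or the pinching superoperator $\mathcal P_{R_i}$ of some Hermitian one-qubit operator $R_i$ acting on qubit $i$. Suppose that for each $i$ such that $\mathcal P_i$ is not the identity, $\Delta(R_i)\ge\eta_i$ and for all $j$ with $(i,j)\in E$, $\|[R_i\otimes I_j,h_{i,j}]\|\le\kappa_i$. Define $h'_{i,j}=(\mathcal P_i\otimes\mathcal P_j\otimes \mathrm{id}_{[n]\setminus\{i,j\}})(h_{i,j})$ and $H'=\sum_{(i,j)\in E}h'_{i,j}$. Then: 1. For every $i$ such that $\mathcal P_i$ is not the identity, all the terms $h'_{i,j}$ acting on qubit $i$ commute with each other and with $R_i$. 2. For all $(i,j)\in E$, $\|h'_{i,j}-h_{i,j}\|\le 4\left(\frac{\kappa_i}{\eta_i}+\frac{\kappa_j}{\eta_j}\right)$.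
   Context: For a Hermitian $A\in\mathbb C^{2\times 2}$ with spectral decomposition $A=\lambda_{\min}(A)\Pi+\lambda_{\max}(A)(I-\Pi)$, the spectral gap is $\Delta(A)=\lambda_{\max}(A)-\lambda_{\min}(A)$, and the pinching superoperator is $\mathcal P_A(X)=\Pi X\Pi+(I-\Pi)X(I-\Pi)$ for $X\in\mathbb C^{2\times2}$ (applied on the corresponding qubit tensor factor). $\|\cdot\|$ is the operator norm and $[A,B]=AB-BA$. *)

(* Defs.v *)
From HB Require Import structures.
From mathcomp Require Import all_boot all_order all_algebra.
From mathcomp Require Import complex.
From mathcomp Require Import classical_sets reals.
Set Implicit Arguments. Unset Strict Implicit. Unset Printing Implicit Defensive.
Import Order.TTheory GRing.Theory Num.Theory.
Local Open Scope ring_scope.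
Local Open Scope classical_set_scope.

Section QubitDefs.
Variable R : realType.
Local Notation C := R[i].

Definition basis (n : nat) := {ffun 'I_n -> bool}.
Definition dimq (n : nat) : nat := #|{: basis n}|.
(* operators on the n-qubit space C^(2^n), rows/columns indexed by basis states *)
Definition op (n : nat) := 'M[C]_(dimq n).
Definition cfg (n : nat) (a : 'I_(dimq n)) : basis n := enum_val a.

Definition b2o (b : bool) : 'I_2 := inord b.

Definition cabs (z : C) : R := Num.sqrt (complex.Re z ^+ 2 + complex.Im z ^+ 2).
Definition vnorm (m : nat) (v : 'cV[C]_m) : R :=
  Num.sqrt (\sum_k cabs (v k 0) ^+ 2).
Definition opnorm (m : nat) (A : 'M[C]_m) : R :=
  sup [set vnorm (A *m v) | v in [set v : 'cV[C]_m | vnorm v <= 1]].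

Definition adjmx (m : nat) (A : 'M[C]_m) : 'M[C]_m := (map_mx (@conjc R) A)^T.
Definition is_hermitian (m : nat) (A : 'M[C]_m) : Prop := adjmx A = A.
Definition commutator (m : nat) (A B : 'M[C]_m) : 'M[C]_m := A *m B - B *m A.

(* X acting on qubit i, tensored with the identity on the other qubits *)
Definition embed1 (n : nat) (i : 'I_n) (X : 'M[C]_2) : op n :=
  \matrix_(a, b) if [forall k, (k != i) ==> (cfg a k == cfg b k)]
                 then X (b2o (cfg a i)) (b2o (cfg b i)) else 0.

(* h acts nontrivially only on the qubits of S, i.e. h = X_S (x) I_{[n]\S} *)
Definition acts_only_on (n : nat) (S : {set 'I_n}) (h : op n) : Prop :=
  (forall a b, (exists k, k \notin S /\ cfg a k != cfg b k) -> h a b = 0) /\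
  (forall a b a' b',
      (forall k, k \notin S -> cfg a k = cfg b k) ->
      (forall k, k \notin S -> cfg a' k = cfg b' k) ->
      (forall k, k \in S -> cfg a k = cfg a' k /\ cfg b k = cfg b' k) ->
      h a b = h a' b').

(* A = lmin * Pi + lmax * (I - Pi) is the spectral decomposition of a Hermitian
   2x2 matrix A: Pi is a rank-one orthogonal projector and lmin <= lmax, so that
   lmin = lambda_min(A), lmax = lambda_max(A). *)
Definition spectral_decomp (A Pi : 'M[C]_2) (lmin lmax : R) : Prop :=
  [/\ Pi *m Pi = Pi, is_hermitian Pi, \rank Pi = 1%N, lmin <= lmax &
      A = (lmin%:C)%C *: Pi + (lmax%:C)%C *: (1%:M - Pi)].

Definition spectral_gap (lmin lmax : R) : R := lmax - lmin.

Definition pinch (n : nat) (i : 'I_n) (Pi : 'M[C]_2) (X : op n) : op n :=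
  embed1 i Pi *m X *m embed1 i Pi +
  embed1 i (1%:M - Pi) *m X *m embed1 i (1%:M - Pi).

(* P_i: identity if pin i = false, pinching of R_i (projector Pm i) otherwise *)
Definition Pmap (n : nat) (pin : 'I_n -> bool) (Pm : 'I_n -> 'M[C]_2)
  (i : 'I_n) (X : op n) : op n := if pin i then pinch i (Pm i) X else X.

Definition hprime (n : nat) (pin : 'I_n -> bool) (Pm : 'I_n -> 'M[C]_2)
  (h : 'I_n -> 'I_n -> op n) (i j : 'I_n) : op n :=
  Pmap pin Pm i (Pmap pin Pm j (h i j)).

End QubitDefs.

(* Main.v *)
Require Import Defs.
From HB Require Import structures.
From mathcomp Require Import all_boot all_order all_algebra.
From mathcomp Require Import complex.
From mathcomp Require Import classical_sets reals.
From mathcomp Require Import ring lra.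
Import Order.TTheory GRing.Theory Num.Theory.
Local Open Scope ring_scope.

Module Aux.
Set Implicit Arguments. Unset Strict Implicit. Unset Printing Implicit Defensive.

Section S.
Variable R : realType.
Local Notation C := R[i].
Variable n : nat.
Local Notation cfg := (@cfg n).
Local Notation op := (op R n).
Definition idx (f : basis n) : 'I_(dimq n) := enum_rank f.
Lemma cfg_idx f : cfg (idx f) = f.
Proof. exact: enum_rankK. Qed.
Lemma idx_cfg a : idx (cfg a) = a.
Proof. exact: enum_valK. Qed.
Lemma sum_cfg (F : 'I_(dimq n) -> C) : \sum_c F c = \sum_(f : basis n) F (idx f).
Proof.
rewrite (reindex idx) //; exists cfg => x _; [exact: cfg_idx | exact: idx_cfg].
Qed.

Definition upd (f : basis n) (i : 'I_n) (x : bool) : basis n :=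
  [ffun k => if k == i then x else f k].
Definition agree (i : 'I_n) (f g : basis n) : bool :=
  [forall k, (k != i) ==> (f k == g k)].

Lemma updE (f : basis n) i x k : upd f i x k = if k == i then x else f k.
Proof. by rewrite ffunE. Qed.
Lemma upd_at (f : basis n) i x : upd f i x i = x.
Proof. by rewrite updE eqxx. Qed.
Lemma updK (f : basis n) i x y : upd (upd f i x) i y = upd f i y.
Proof. by apply/ffunP => k; rewrite !updE; case: eqP. Qed.
Lemma upd_id (f : basis n) i : upd f i (f i) = f.
Proof. by apply/ffunP => k; rewrite !updE; case: eqP => // ->. Qed.

Lemma agreeP i (f g : basis n) : reflect (forall k, k != i -> f k = g k) (agree i f g).
Proof.
apply: (iffP forallP) => H k.
  by move=> ki; move: (H k); rewrite ki /= => /eqP.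
by apply/implyP => /H ->.
Qed.
Lemma agreeC i (f g : basis n) : agree i f g = agree i g f.
Proof. by apply/agreeP/agreeP => H k /H ->. Qed.
Lemma agree_upd i (f g : basis n) x : agree i (upd f i x) g = agree i f g.
Proof.
apply/agreeP/agreeP => H k ki; move: (H k ki); by rewrite updE (negbTE ki).
Qed.
Lemma agree_upd_r i (f g : basis n) x : agree i f (upd g i x) = agree i f g.
Proof. by rewrite agreeC agree_upd agreeC. Qed.
Lemma agree_updE i (f g : basis n) : agree i f g -> upd f i (g i) = g.
Proof.
move/agreeP => H; apply/ffunP => k; rewrite updE; case: eqP => [->//|/eqP ki].
exact: H.
Qed.
Lemma agree_refl i (f : basis n) : agree i f f.
Proof. by apply/agreeP. Qed.

Lemma sum_off i (a : basis n) (G : basis n -> C) :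
  (forall f, ~~ agree i a f -> G f = 0) -> \sum_f G f = \sum_(x : bool) G (upd a i x).
Proof.
move=> HG.
rewrite (partition_big (fun f : basis n => f i) predT) //=.
apply: eq_bigr => x _.
rewrite (bigD1 (upd a i x)) /=; last by rewrite upd_at.
rewrite big1 ?addr0 // => f /andP [/eqP fx fne].
apply: HG; apply: contra fne => ag.
by apply/eqP; rewrite -fx agree_updE.
Qed.

Lemma b2o_inj : injective b2o.
Proof. by case; case => // /(congr1 val); rewrite /= !inordK. Qed.
Lemma sum_I2 (F : 'I_2 -> C) : \sum_k F k = \sum_(x : bool) F (b2o x).
Proof.
rewrite big_bool /= !big_ord_recr big_ord0 /= add0r addrC; congr (_ + _); congr F;
  by apply: val_inj; rewrite /= inordK.
Qed.

Lemma embed1E (i : 'I_n) (X : 'M[C]_2) a b : embed1 i X a b =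
  if agree i (cfg a) (cfg b) then X (b2o (cfg a i)) (b2o (cfg b i)) else 0.
Proof. by rewrite mxE. Qed.

Lemma embed1_mull (i : 'I_n) (X : 'M[C]_2) (Z : op) a b :
  (embed1 i X *m Z) a b =
  \sum_(x : bool) X (b2o (cfg a i)) (b2o x) * Z (idx (upd (cfg a) i x)) b.
Proof.
rewrite mxE sum_cfg (@sum_off i (cfg a)).
  apply: eq_bigr => x _; rewrite embed1E cfg_idx agree_upd_r agree_refl upd_at.
  by [].
by move=> f /negbTE nag; rewrite embed1E cfg_idx nag mul0r.
Qed.

Lemma embed1_mulr (i : 'I_n) (X : 'M[C]_2) (Z : op) a b :
  (Z *m embed1 i X) a b =
  \sum_(y : bool) Z a (idx (upd (cfg b) i y)) * X (b2o y) (b2o (cfg b i)).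
Proof.
rewrite mxE sum_cfg (@sum_off i (cfg b)).
  apply: eq_bigr => x _; rewrite embed1E cfg_idx agree_upd agree_refl upd_at.
  by [].
by move=> f nag; rewrite embed1E cfg_idx agreeC (negbTE nag) mulr0.
Qed.

Lemma embed1M (i : 'I_n) (X Y : 'M[C]_2) : embed1 i X *m embed1 i Y = embed1 i (X *m Y).
Proof.
apply/matrixP => a b; rewrite embed1_mull embed1E.
under eq_bigr => x _ do rewrite embed1E cfg_idx agree_upd upd_at.
case: ifP => _; last by rewrite big1 // => x _; rewrite mulr0.
by rewrite mxE sum_I2.
Qed.

Lemma embed1_1 (i : 'I_n) : embed1 i 1%:M = 1%:M :> op.
Proof.
apply/matrixP => a b; rewrite embed1E !mxE.
have -> : (a == b) = agree i (cfg a) (cfg b) && (cfg a i == cfg b i).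
  apply/eqP/andP => [->|[/agreeP ag /eqP ei]]; first by rewrite agree_refl.
  rewrite -(idx_cfg a) -(idx_cfg b); congr idx; apply/ffunP => k.
  by case: (eqVneq k i) => [->|/ag].
case: (agree _ _ _) => //=.
by case: (eqVneq (cfg a i) (cfg b i)) => [->|ne]; rewrite ?eqxx // (inj_eq b2o_inj) (negbTE ne).
Qed.

Lemma embed1D (i : 'I_n) (X Y : 'M[C]_2) : embed1 i (X + Y) = embed1 i X + embed1 i Y :> op.
Proof. by apply/matrixP => a b; rewrite !mxE; case: ifP; rewrite ?addr0 // mxE. Qed.
Lemma embed1Z (i : 'I_n) (c : C) (X : 'M[C]_2) : embed1 i (c *: X) = c *: embed1 i X :> op.
Proof. by apply/matrixP => a b; rewrite !mxE; case: ifP; rewrite ?mulr0 // mxE. Qed.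
Lemma embed1N (i : 'I_n) (X : 'M[C]_2) : embed1 i (- X) = - embed1 i X :> op.
Proof. by apply/matrixP => a b; rewrite !mxE; case: ifP; rewrite ?oppr0 // mxE. Qed.
Lemma embed1B (i : 'I_n) (X Y : 'M[C]_2) : embed1 i (X - Y) = embed1 i X - embed1 i Y :> op.
Proof. by rewrite embed1D embed1N. Qed.

Lemma adj_embed1 (i : 'I_n) (X : 'M[C]_2) : adjmx (embed1 i X) = embed1 i (adjmx X) :> op.
Proof.
apply/matrixP => a b; rewrite /adjmx !mxE -!/(agree _ _ _) agreeC.
by case: ifP => _; rewrite ?mxE //= oppr0.
Qed.


Definition offS (S : {set 'I_n}) (f g : basis n) := forall k, k \notin S -> f k = g k.
Definition onS (S : {set 'I_n}) (f g f' g' : basis n) :=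
  forall k, k \in S -> f k = f' k /\ g k = g' k.

Lemma actsI (S : {set 'I_n}) (Z : op) :
  (forall (f g : basis n) k, k \notin S -> f k != g k -> Z (idx f) (idx g) = 0) ->
  (forall (f g f' g' : basis n), offS S f g -> offS S f' g' -> onS S f g f' g' ->
      Z (idx f) (idx g) = Z (idx f') (idx g')) ->
  acts_only_on S Z.
Proof.
move=> H1 H2; split.
  by move=> a b [k [kS ne]]; rewrite -(idx_cfg a) -(idx_cfg b); apply: (H1 _ _ k).
move=> a b a' b' o1 o2 o3.
by rewrite -(idx_cfg a) -(idx_cfg b) -(idx_cfg a') -(idx_cfg b'); apply: H2.
Qed.

Lemma acts0 (S : {set 'I_n}) (Z : op) : acts_only_on S Z ->
  forall (f g : basis n) k, k \notin S -> f k != g k -> Z (idx f) (idx g) = 0.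
Proof.
by case=> H _ f g k kS ne; apply: H; exists k; rewrite !cfg_idx.
Qed.

Lemma actsV (S : {set 'I_n}) (Z : op) : acts_only_on S Z ->
  forall (f g f' g' : basis n), offS S f g -> offS S f' g' -> onS S f g f' g' ->
      Z (idx f) (idx g) = Z (idx f') (idx g').
Proof.
by case=> _ H f g f' g' o1 o2 o3; apply: H; rewrite ?cfg_idx.
Qed.

Lemma acts_embed1 (S : {set 'I_n}) (i : 'I_n) (X : 'M[C]_2) : i \in S -> acts_only_on S (embed1 i X).
Proof.
move=> iS; apply: actsI.
  move=> f g k kS ne; rewrite embed1E !cfg_idx; case: agreeP => // H.
  by move: ne; rewrite H ?eqxx //; apply: contraNneq kS => ->.
move=> f g f' g' o1 o2 o3; rewrite !embed1E !cfg_idx.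
have [e1 e2] := o3 i iS; rewrite e1 e2.
have -> : agree i f g = agree i f' g'; last by [].
apply/agreeP/agreeP => H k ki; case: (boolP (k \in S)) => kS.
- by have [<- <-] := o3 k kS; apply: H.
- by rewrite -o2.
- by have [-> ->] := o3 k kS; apply: H.
- by rewrite o1.
Qed.

Lemma acts_sub (S T : {set 'I_n}) (Z : op) : {subset S <= T} -> acts_only_on S Z -> acts_only_on T Z.
Proof.
move=> sST HZ; apply: actsI.
  move=> f g k kT ne; apply: (acts0 HZ) ne; apply: contra kT; exact: sST.
move=> f g f' g' o1 o2 o3.
case: (boolP [exists k, (k \notin S) && (f k != g k)]).
  case/existsP => k /andP [kS ne].
  rewrite (acts0 HZ kS ne); symmetry; apply: (acts0 HZ kS).
  case: (boolP (k \in T)) => kT; first by have [<- <-] := o3 k kT.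
  by move: ne; rewrite o1 ?eqxx.
move=> H1.
have H1' : offS S f g.
  move=> k kS; apply/eqP; apply: contraNT H1 => ne; apply/existsP; exists k.
  by rewrite kS ne.
apply: (actsV HZ) => //.
  move=> k kS; case: (boolP (k \in T)) => kT; last exact: o2.
  by have [<- <-] := o3 k kT; apply: H1'.
by move=> k kS; apply: o3; apply: sST.
Qed.

Lemma acts_add (S : {set 'I_n}) (Z W : op) : acts_only_on S Z -> acts_only_on S W -> acts_only_on S (Z + W).
Proof.
move=> HZ HW; apply: actsI.
  by move=> f g k kS ne; rewrite mxE (acts0 HZ kS ne) (acts0 HW kS ne) addr0.
by move=> f g f' g' o1 o2 o3; rewrite !mxE (actsV HZ o1 o2 o3) (actsV HW o1 o2 o3).
Qed.

Lemma sandE (j : 'I_n) (X Y : 'M[C]_2) (Z : op) (f g : basis n) :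
  (embed1 j X *m Z *m embed1 j Y) (idx f) (idx g) =
  \sum_(y : bool) \sum_(x : bool)
     X (b2o (f j)) (b2o x) * Z (idx (upd f j x)) (idx (upd g j y)) * Y (b2o y) (b2o (g j)).
Proof.
rewrite embed1_mulr; apply: eq_bigr => y _.
rewrite embed1_mull mulr_suml; apply: eq_bigr => x _.
by rewrite !cfg_idx.
Qed.

Lemma acts_sand (S : {set 'I_n}) (j : 'I_n) (X Y : 'M[C]_2) (Z : op) : j \in S ->
  acts_only_on S Z -> acts_only_on S (embed1 j X *m Z *m embed1 j Y).
Proof.
move=> jS HZ; apply: actsI.
  move=> f g k kS ne; rewrite sandE big1 // => y _; rewrite big1 // => x _.
  have kj : k != j by apply: contraNneq kS => ->.
  by rewrite (acts0 HZ kS) ?mulr0 ?mul0r // !updE (negbTE kj).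
move=> f g f' g' o1 o2 o3; rewrite !sandE.
have [e1 e2] := o3 j jS; rewrite e1 e2.
apply: eq_bigr => y _; apply: eq_bigr => x _.
congr (_ * _ * _); apply: (actsV HZ).
- move=> k kS; rewrite !updE; case: eqP => [kj|_]; last by apply: o1.
  by move: kS; rewrite kj jS.
- move=> k kS; rewrite !updE; case: eqP => [kj|_]; last by apply: o2.
  by move: kS; rewrite kj jS.
- by move=> k kS; rewrite !updE; case: eqP => // _; apply: o3.
Qed.


Definition mix (S : {set 'I_n}) (g f : basis n) : basis n :=
  [ffun k => if k \in S then g k else f k].

Lemma ffun_neq (f g : basis n) : f != g -> exists k, f k != g k.
Proof.
move=> ne; apply/existsP; rewrite -negb_forall; apply: contra ne => /forallP H.
by apply/eqP/ffunP => k; apply/eqP.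
Qed.

Lemma mul_single (S T : {set 'I_n}) (A B : op) f g :
  acts_only_on S A -> acts_only_on T B -> (forall k, k \in S -> k \in T -> False) ->
  (A *m B) (idx f) (idx g) = A (idx f) (idx (mix S g f)) * B (idx (mix S g f)) (idx g).
Proof.
move=> HA HB dST; rewrite mxE sum_cfg (bigD1 (mix S g f)) //= big1 ?addr0 // => h hne.
have [k hk] := ffun_neq hne; move: hk; rewrite ffunE; case: ifP => kS hk.
  by rewrite (acts0 HB _ hk) ?mulr0 //; apply/negP => /(dST k kS).
by rewrite (acts0 HA (k := k)) ?mul0r ?kS // eq_sym.
Qed.

Lemma acts_comm (S T : {set 'I_n}) (A B : op) :
  acts_only_on S A -> acts_only_on T B -> (forall k, k \in S -> k \in T -> False) ->
  A *m B = B *m A.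
Proof.
move=> HA HB dST; apply/matrixP => a b.
rewrite -(idx_cfg a) -(idx_cfg b); move: (cfg a) (cfg b) => f g.
rewrite (mul_single f g HA HB dST) (mul_single f g HB HA) //; last first.
  by move=> k kT kS; apply: (dST k).
set c := mix S g f; set d := mix T g f.
case: (boolP [exists k, [&& k \notin S, k \notin T & f k != g k]]).
  case/existsP => k /and3P [kS kT ne].
  rewrite (acts0 HB (k := k) kT) ?mulr0; last by rewrite /c ffunE (negbTE kS).
  by rewrite (acts0 HA (k := k) kS) ?mulr0 // /d ffunE (negbTE kT).
move=> Hno.
have fg : forall k, k \notin S -> k \notin T -> f k = g k.
  move=> k kS kT; apply/eqP; apply: contraNT Hno => ne; apply/existsP; exists k.
  by rewrite kS kT ne.
rewrite mulrC; congr (_ * _).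
  apply: (actsV HB).
  - move=> k kT; rewrite /c ffunE; case: ifP => kS //; apply: fg => //; by rewrite kS.
  - by move=> k kT; rewrite /d ffunE (negbTE kT).
  - move=> k kT; rewrite /c /d !ffunE kT; split => //.
    by case: ifP => kS //; case: (dST k kS kT).
apply: (actsV HA).
- by move=> k kS; rewrite /c ffunE (negbTE kS).
- move=> k kS; rewrite /d ffunE; case: ifP => kT //; apply: fg => //; by rewrite kT.
- move=> k kS; rewrite /c /d !ffunE kS; split => //.
  by case: ifP => kT //; case: (dST k kS kT).
Qed.


Section Rank1.
Variable (pi : 'M[C]_2).
Local Notation p u v := (pi (b2o u) (b2o v)).
Hypothesis hdet : p false false * p true true = p false true * p true false.

Lemma rank1_swap u x y v : p u x * p y v = p y x * p u v.
Proof.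
case: u; case: x; case: y; case: v => //;
  first [ by rewrite mulrC | by rewrite hdet mulrC | by rewrite mulrC hdet
        | by rewrite -hdet mulrC | by rewrite mulrC -hdet | by rewrite hdet | by rewrite -hdet].
Qed.

Variable (i : 'I_n) (Z : op).
Definition tau (f g : basis n) : C :=
  \sum_(y : bool) \sum_(x : bool) p y x * Z (idx (upd f i x)) (idx (upd g i y)).
Definition Zt : op := \matrix_(a, b) ((cfg a i == cfg b i)%:R * tau (cfg a) (cfg b)).

Lemma tau_updl f g x : tau (upd f i x) g = tau f g.
Proof. by rewrite /tau; under eq_bigr do under eq_bigr do rewrite updK. Qed.

Lemma pinch_fact (S : {set 'I_n}) : acts_only_on S Z -> i \in S ->
  acts_only_on (S :\ i) Zt /\ embed1 i pi *m Z *m embed1 i pi = embed1 i pi *m Zt.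
Proof.
move=> HZ iS; split.
  apply: actsI.
    move=> f g k kS ne; rewrite mxE !cfg_idx.
    case: (eqVneq k i) => [ki|ki]; first by rewrite -ki (negbTE ne) mul0r.
    have kS' : k \notin S by move: kS; rewrite in_setD1 ki.
    rewrite /tau big1 ?mulr0 // => y _; rewrite big1 // => x _.
    by rewrite (acts0 HZ kS') ?mulr0 // !updE (negbTE ki).
  move=> f g f' g' o1 o2 o3; rewrite !mxE !cfg_idx.
  have iS' : i \notin S :\ i by rewrite in_setD1 eqxx.
  rewrite (o1 i iS') (o2 i iS') !eqxx; congr (_ * _).
  apply: eq_bigr => y _; apply: eq_bigr => x _; congr (_ * _); apply: (actsV HZ).
  - move=> k kS; rewrite !updE; case: eqP => [ki|/eqP ki]; first by move: kS; rewrite ki iS.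
    by apply: o1; rewrite in_setD1 ki.
  - move=> k kS; rewrite !updE; case: eqP => [ki|/eqP ki]; first by move: kS; rewrite ki iS.
    by apply: o2; rewrite in_setD1 ki.
  - move=> k kS; rewrite !updE; case: eqP => [//|/eqP ki].
    by apply: o3; rewrite in_setD1 ki.
apply/matrixP => a b; rewrite -(idx_cfg a) -(idx_cfg b); move: (cfg a) (cfg b) => f g.
rewrite sandE embed1_mull cfg_idx.
rewrite [RHS](bigD1 (g i)) //= [X in _ + X]big1 ?addr0; last first.
  by move=> x /negbTE xg; rewrite mxE !cfg_idx upd_at xg mul0r mulr0.
rewrite mxE !cfg_idx upd_at eqxx mul1r tau_updl /tau mulr_sumr.
apply: eq_bigr => y _; rewrite mulr_sumr; apply: eq_bigr => x _.
by rewrite mulrAC rank1_swap mulrCA mulrA.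
Qed.
End Rank1.


Lemma det22 (A : 'M[C]_2) : \det A = A 0 0 * A 1 1 - A 0 1 * A 1 0.
Proof.
rewrite (expand_det_row _ 0) !big_ord_recr big_ord0 /= add0r /cofactor !det_mx11 !mxE /=.
have -> : widen_ord (m:=2) (leqnSn 1) ord_max = 0 by apply: val_inj.
have -> : lift (0 : 'I_2) (0 : 'I_1) = 1 by apply: val_inj.
have -> : lift (ord_max : 'I_2) (0 : 'I_1) = 0 by apply: val_inj.
have -> : (ord_max : 'I_2) = 1 by apply: val_inj.
by rewrite expr0 expr1 !mul1r mulN1r mulrN.
Qed.

Lemma b2oF : b2o false = 0. Proof. by apply: val_inj; rewrite /= inordK. Qed.
Lemma b2oT : b2o true = 1. Proof. by apply: val_inj; rewrite /= inordK. Qed.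

Lemma hdet_of (A : 'M[C]_2) : A \notin unitmx ->
  A (b2o false) (b2o false) * A (b2o true) (b2o true) =
  A (b2o false) (b2o true) * A (b2o true) (b2o false).
Proof.
rewrite unitmxE unitfE negbK det22 subr_eq0 b2oF b2oT => /eqP; exact.
Qed.

Section Proj.
Variable Pi : 'M[C]_2.
Hypotheses (PiPi : Pi *m Pi = Pi) (Pih : adjmx Pi = Pi) (Pirk : \rank Pi = 1%N).
Let Qi := 1%:M - Pi.
Lemma QiQi : Qi *m Qi = Qi.
Proof. by rewrite /Qi mulmxBl !mulmxBr !mul1mx mulmx1 PiPi subrr subr0. Qed.
Lemma PiQi : Pi *m Qi = 0.
Proof. by rewrite /Qi mulmxBr mulmx1 PiPi subrr. Qed.
Lemma QiPi : Qi *m Pi = 0.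
Proof. by rewrite /Qi mulmxBl mul1mx PiPi subrr. Qed.
Lemma Qih : adjmx Qi = Qi.
Proof.
rewrite /Qi -{2}Pih; apply/matrixP => a b; rewrite /adjmx !mxE rmorphB /=.
by rewrite conjc_nat eq_sym.
Qed.
Lemma Pi_nunit : Pi \notin unitmx.
Proof. by apply/negP => /mxrank_unit; rewrite Pirk. Qed.
Lemma Qi_nunit : Qi \notin unitmx.
Proof.
apply/negP => /mulKmx H; move: (H 2%N Pi); rewrite QiPi mulmx0 => P0.
by move: Pirk; rewrite -P0 mxrank0.
Qed.
End Proj.


Local Opaque dimq.
Lemma alg4 (P Q X1 Y1 X2 Y2 : op) :
  P *m P = P -> Q *m Q = Q -> P *m Q = 0 -> Q *m P = 0 ->
  X1 *m P = P *m X1 -> X1 *m Q = Q *m X1 -> Y1 *m P = P *m Y1 -> Y1 *m Q = Q *m Y1 ->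
  (P *m X1 + Q *m Y1) *m (P *m X2 + Q *m Y2) = P *m (X1 *m X2) + Q *m (Y1 *m Y2).
Proof.
move=> PP QQ PQ QP X1P X1Q Y1P Y1Q.
rewrite mulmxDl !mulmxDr.
rewrite -!mulmxA (mulmxA X1 P) (mulmxA X1 Q) (mulmxA Y1 P) (mulmxA Y1 Q).
rewrite X1P X1Q Y1P Y1Q !mulmxA PP QQ PQ QP !mul0mx addr0 add0r.
by rewrite -!mulmxA.
Qed.

Lemma pinch_comm (i : 'I_n) (Pi : 'M[C]_2) (A B : op) (Sa Sb : {set 'I_n}) :
  Pi *m Pi = Pi -> \rank Pi = 1%N -> acts_only_on Sa A -> acts_only_on Sb B ->
  i \in Sa -> i \in Sb ->
  (forall k, k \in Sa :\ i -> k \in Sb :\ i -> False) ->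
  pinch i Pi A *m pinch i Pi B = pinch i Pi B *m pinch i Pi A.
Proof.
move=> PiPi rk HA HB iSa iSb dab.
have hP := hdet_of (Pi_nunit rk).
have hQ := hdet_of (Qi_nunit PiPi rk).
have [aPA eA1] := pinch_fact hP HA iSa.
have [aQA eA2] := pinch_fact hQ HA iSa.
have [aPB eB1] := pinch_fact hP HB iSb.
have [aQB eB2] := pinch_fact hQ HB iSb.
rewrite /pinch eA1 eA2 eB1 eB2.
have PP : embed1 i Pi *m embed1 i Pi = embed1 i Pi :> op by rewrite embed1M PiPi.
have QQ : embed1 i (1%:M - Pi) *m embed1 i (1%:M - Pi) = embed1 i (1%:M - Pi) :> op.
  by rewrite embed1M QiQi.
have PQ : embed1 i Pi *m embed1 i (1%:M - Pi) = 0 :> op.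
  by rewrite embed1M PiQi // -(scale0r (0 : 'M[C]_2)) embed1Z scale0r.
have QP : embed1 i (1%:M - Pi) *m embed1 i Pi = 0 :> op.
  by rewrite embed1M QiPi // -(scale0r (0 : 'M[C]_2)) embed1Z scale0r.
have cm : forall (S : {set 'I_n}) (Y : op) (X : 'M[C]_2), acts_only_on (S :\ i) Y ->
    Y *m embed1 i X = embed1 i X *m Y.
  move=> S Y X HY; apply: (acts_comm HY (acts_embed1 X (finset.set11 i))).
  by move=> k; rewrite in_setD1 finset.in_set1 => /andP [/negbTE ->].
rewrite (alg4 _ _ PP QQ PQ QP (cm _ _ _ aPA) (cm _ _ _ aPA) (cm _ _ _ aQA) (cm _ _ _ aQA)).
rewrite (alg4 _ _ PP QQ PQ QP (cm _ _ _ aPB) (cm _ _ _ aPB) (cm _ _ _ aQB) (cm _ _ _ aQB)).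
by rewrite (acts_comm aPA aPB dab) (acts_comm aQA aQB dab).
Qed.

Lemma pinch_commR (i : 'I_n) (Pi : 'M[C]_2) (A : op) (l1 l2 : C) :
  Pi *m Pi = Pi ->
  pinch i Pi A *m embed1 i (l1 *: Pi + l2 *: (1%:M - Pi)) =
  embed1 i (l1 *: Pi + l2 *: (1%:M - Pi)) *m pinch i Pi A.
Proof.
move=> PiPi.
have PP : embed1 i Pi *m embed1 i Pi = embed1 i Pi :> op by rewrite embed1M PiPi.
have QQ : embed1 i (1%:M - Pi) *m embed1 i (1%:M - Pi) = embed1 i (1%:M - Pi) :> op.
  by rewrite embed1M QiQi.
have PQ : embed1 i Pi *m embed1 i (1%:M - Pi) = 0 :> op.
  by rewrite embed1M PiQi // -(scale0r (0 : 'M[C]_2)) embed1Z scale0r.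
have QP : embed1 i (1%:M - Pi) *m embed1 i Pi = 0 :> op.
  by rewrite embed1M QiPi // -(scale0r (0 : 'M[C]_2)) embed1Z scale0r.
rewrite embed1D !embed1Z /pinch.
set P := embed1 i Pi; set Q := embed1 i (1%:M - Pi).
rewrite mulmxDl !mulmxDr !mulmxDl.
rewrite -!scalemxAr.
rewrite -!scalemxAl.
rewrite -!mulmxA.
rewrite PP QQ PQ QP.
rewrite !mulmx0.
rewrite !scaler0 addr0 add0r.
rewrite !mulmxA PP QQ PQ QP !mul0mx !scaler0 addr0 add0r.
by [].
Qed.

End S.

Section N.
Variable R : realType.
Local Notation C := R[i].

Lemma cabs2 (z : C) : cabs z ^+ 2 = complex.Re z ^+ 2 + complex.Im z ^+ 2.
Proof. by rewrite /cabs sqr_sqrtr // addr_ge0 // sqr_ge0. Qed.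
Lemma cabs_ge0 (z : C) : 0 <= cabs z.
Proof. exact: sqrtr_ge0. Qed.
Lemma cabs_normc (z : C) : cabs z = Normc.normc z.
Proof. by case: z. Qed.

Lemma conj_mul (z : C) : (z^*)%C * z = (cabs z ^+ 2)%:C%C.
Proof.
rewrite cabs2; case: z => a b /=.
by apply/eqP; rewrite eq_complex /=; apply/andP; split; apply/eqP; ring.
Qed.

Lemma Re_scale (c : R) (z : C) : complex.Re ((c%:C)%C * z) = c * complex.Re z.
Proof. by case: z => a b /=; ring. Qed.
Lemma Im_scale (c : R) (z : C) : complex.Im ((c%:C)%C * z) = c * complex.Im z.
Proof. by case: z => a b /=; ring. Qed.

Variable m : nat.
Definition ns (v : 'cV[C]_m) : R := \sum_k cabs (v k 0) ^+ 2.
Definition vadj (v : 'cV[C]_m) : 'rV[C]_m := (map_mx (@conjc R) v)^T.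

Lemma ns_ge0 v : 0 <= ns v.
Proof. by apply: sumr_ge0 => k _; rewrite sqr_ge0. Qed.

Lemma vnormE v : vnorm v = Num.sqrt (ns v).
Proof. by []. Qed.

Lemma nsE v : (vadj v *m v) 0 0 = (ns v)%:C%C.
Proof.
rewrite mxE /ns rmorph_sum /=; apply: eq_bigr => k _.
by rewrite !mxE conj_mul.
Qed.


Lemma vadj_mul (A : 'M[C]_m) v : vadj (A *m v) = vadj v *m adjmx A.
Proof. by rewrite /vadj /adjmx map_mxM trmx_mul. Qed.
Lemma vadjD u v : vadj (u + v) = vadj u + vadj v.
Proof. by rewrite /vadj map_mxD linearD. Qed.
Lemma vadjN v : vadj (- v) = - vadj v.
Proof. by rewrite /vadj map_mxN linearN. Qed.

Lemma ns_pyth (P Q : 'M[C]_m) u w : adjmx P = P -> adjmx Q = Q ->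
  P *m Q = 0 -> Q *m P = 0 ->
  ns (P *m u + Q *m w) = ns (P *m u) + ns (Q *m w).
Proof.
move=> hP hQ PQ QP; apply: (@complexI R); rewrite rmorphD /= -!nsE.
rewrite vadjD mulmxDl !mulmxDr !vadj_mul hP hQ.
have -> : vadj u *m P *m (Q *m w) = 0 by rewrite -mulmxA (mulmxA P) PQ mul0mx mulmx0.
have -> : vadj w *m Q *m (P *m u) = 0 by rewrite -mulmxA (mulmxA Q) QP mul0mx mulmx0.
by rewrite addr0 add0r mxE.
Qed.

Lemma ns_scale (c : R) v : ns ((c%:C)%C *: v) = c ^+ 2 * ns v.
Proof.
rewrite /ns mulr_sumr; apply: eq_bigr => k _; rewrite !mxE !cabs2 Re_scale Im_scale.
by ring.
Qed.

Lemma nsN v : ns (- v) = ns v.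
Proof.
have -> : - v = ((-1)%:C)%C *: v by rewrite rmorphN1 scaleN1r.
by rewrite ns_scale sqrrN expr1n mul1r.
Qed.

Lemma ns_add u v : ns (u + v) <= 2%:R * ns u + 2%:R * ns v.
Proof.
rewrite /ns !mulr_sumr -big_split /=; apply: ler_sum => k _.
rewrite !mxE !cabs2 !raddfD /=.
set a := complex.Re _; set b := complex.Re _; set c := complex.Im _; set d := complex.Im _.
rewrite -subr_ge0; have -> : 2%:R * (a ^+ 2 + c ^+ 2) + 2%:R * (b ^+ 2 + d ^+ 2) - ((a + b) ^+ 2 + (c + d) ^+ 2) = (a - b) ^+ 2 + (c - d) ^+ 2 by ring.
by rewrite addr_ge0 ?sqr_ge0.
Qed.

Lemma ns_eq0 v : ns v = 0 -> v = 0.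
Proof.
move=> /eqP; rewrite psumr_eq0 => [/allP H|k _]; last by rewrite sqr_ge0.
apply/matrixP => k l; rewrite (ord1 l) mxE.
move: (H k (mem_index_enum k)); rewrite /= sqrf_eq0 => /eqP.
by rewrite cabs_normc => /Normc.eq0_normc.
Qed.


Lemma ns0 : ns 0 = 0.
Proof.
by rewrite /ns big1 // => k _; rewrite mxE cabs_normc Normc.normc0 expr0n.
Qed.

Lemma normc_sum (F : 'I_m -> C) :
  Normc.normc (\sum_l F l) <= \sum_l Normc.normc (F l).
Proof.
elim/big_rec2: _ => [|l y1 y2 _ IH]; first by rewrite Normc.normc0.
by apply: le_trans (le_normcD _ _) _; rewrite lerD2l.
Qed.

Lemma ns_le1 v : vnorm v <= 1 -> ns v <= 1.
Proof. by rewrite vnormE -{1}sqrtr1 ler_sqrt. Qed.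

Lemma entry_le1 v l : ns v <= 1 -> cabs (v l 0) <= 1.
Proof.
move=> H; have : cabs (v l 0) ^+ 2 <= 1.
  apply: le_trans H; rewrite /ns (bigD1 l) //= lerDl.
  by apply: sumr_ge0 => k _; rewrite sqr_ge0.
have := cabs_ge0 (v l 0); set x := cabs _ => x0 hx; nra.
Qed.

Lemma opnorm_ge (A : 'M[C]_m) v : vnorm v <= 1 -> vnorm (A *m v) <= opnorm A.
Proof.
move=> hv; apply: ub_le_sup; last by exists v.
exists (Num.sqrt (\sum_k (\sum_l cabs (A k l)) ^+ 2)).
move=> _ [w hw <-]; rewrite vnormE ler_sqrt; last first.
  by apply: sumr_ge0 => k _; rewrite sqr_ge0.
have hw1 := ns_le1 hw.
apply: ler_sum => k _; apply: lerXn2r; rewrite ?nnegrE.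
- exact: cabs_ge0.
- by apply: sumr_ge0 => l _; exact: cabs_ge0.
rewrite mxE cabs_normc; apply: le_trans (normc_sum _) _.
apply: ler_sum => l _; rewrite Normc.normcM -!cabs_normc.
rewrite -{2}(mulr1 (cabs (A k l))); apply: ler_wpM2l; first exact: cabs_ge0.
exact: entry_le1.
Qed.

Lemma opnorm_le (A : 'M[C]_m) (c : R) : opnorm A <= c ->
  forall v, ns v <= 1 -> ns (A *m v) <= c ^+ 2.
Proof.
move=> hA v hv.
have h1 : vnorm (A *m v) <= c.
  apply: le_trans hA; apply: opnorm_ge; rewrite vnormE -sqrtr1 ler_sqrt //.
have h0 : 0 <= vnorm (A *m v) by exact: sqrtr_ge0.
rewrite -(sqr_sqrtr (ns_ge0 (A *m v))) -vnormE lerXn2r ?nnegrE //.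
exact: le_trans h1.
Qed.

Lemma opnorm_bound (A : 'M[C]_m) (c : R) : 0 <= c ->
  (forall v, ns v <= 1 -> ns (A *m v) <= c ^+ 2) -> opnorm A <= c.
Proof.
move=> c0 H; apply: ge_sup.
  exists (vnorm (A *m 0)), 0 => //.
  by rewrite /= vnormE ns0 sqrtr0.
move=> _ [w hw <-]; rewrite vnormE -(ger0_norm c0) -sqrtr_sqr ler_sqrt ?sqr_ge0 //.
exact: H (ns_le1 hw).
Qed.

Lemma scale_bound (A : 'M[C]_m) (K : R) :
  (forall v, ns v <= 1 -> ns (A *m v) <= K) -> forall w, ns (A *m w) <= K * ns w.
Proof.
move=> H w.
have [w0|wpos] := eqVneq (ns w) 0.
  by rewrite (ns_eq0 w0) mulmx0 ns0 mulr0.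
have wgt : 0 < ns w by rewrite lt_def wpos ns_ge0.
set t := (ns w)^-1.
have t0 : 0 < t by rewrite invr_gt0.
have := H ((Num.sqrt t)%:C%C *: w).
rewrite -scalemxAr !ns_scale sqr_sqrtr; last exact: ltW.
rewrite /t mulVf // lexx => /(_ isT) h.
by rewrite -(ler_pM2l t0) /t mulrA mulrAC mulVf // mul1r.
Qed.

End N.

Lemma lmod_id (K : comRingType) (V : lmodType K) (a b : K) (x y : V) :
  (b - a) *: - (x + y) = a *: x - b *: x - (b *: y - a *: y).
Proof. by rewrite scalerN scalerDr !scalerBl opprD !opprB addrC. Qed.

Section Cm.
Variable R : realType.
Local Notation C := R[i].
Variable n : nat.
Local Notation op := (op R n).

Lemma zmod4 (V : zmodType) (a b c d : V) : (a + d) - (a + b + c + d) = - (b + c).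
Proof.
have -> : a + b + c + d = (a + d) + (b + c) by rewrite -addrA (addrC c d) addrACA.
by rewrite opprD addrA subrr add0r.
Qed.

Section Fix.
Variables (i : 'I_n) (Pi : 'M[C]_2).
Hypotheses (PiPi : Pi *m Pi = Pi) (Pih : adjmx Pi = Pi).
Let P : op := embed1 i Pi.
Let Q : op := embed1 i (1%:M - Pi).
Lemma PP : P *m P = P. Proof. by rewrite /P embed1M PiPi. Qed.
Lemma QQ : Q *m Q = Q. Proof. by rewrite /Q embed1M QiQi. Qed.
Lemma PQ : P *m Q = 0.
Proof. by rewrite /P /Q embed1M PiQi // -(scale0r (0 : 'M[C]_2)) embed1Z scale0r. Qed.
Lemma QP : Q *m P = 0.
Proof. by rewrite /P /Q embed1M QiPi // -(scale0r (0 : 'M[C]_2)) embed1Z scale0r. Qed.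
Lemma hP : adjmx P = P. Proof. by rewrite /P adj_embed1 Pih. Qed.
Lemma hQ : adjmx Q = Q. Proof. by rewrite /Q adj_embed1 Qih. Qed.
Lemma PQ1 : P + Q = 1%:M.
Proof. by rewrite /P /Q -embed1D addrC subrK embed1_1. Qed.

Lemma pyth1 w : ns w = ns (P *m w) + ns (Q *m w).
Proof.
rewrite -ns_pyth ?hP ?hQ ?PQ ?QP //.
by rewrite -mulmxDl PQ1 mul1mx.
Qed.

Lemma nsP w : ns (P *m w) <= ns w.
Proof. by rewrite [leRHS]pyth1 lerDl ns_ge0. Qed.
Lemma nsQ w : ns (Q *m w) <= ns w.
Proof. by rewrite [leRHS]pyth1 lerDr ns_ge0. Qed.

Lemma pinch_contract (Y : op) (K : R) :
  (forall w, ns (Y *m w) <= K * ns w) -> 0 <= K ->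
  forall w, ns (pinch i Pi Y *m w) <= K * ns w.
Proof.
move=> HY K0 w; rewrite /pinch -/P -/Q mulmxDl -!mulmxA ns_pyth ?hP ?hQ ?PQ ?QP //.
rewrite [in leRHS]pyth1 mulrDr; apply: lerD.
  by apply: le_trans (nsP _) _; apply: HY.
by apply: le_trans (nsQ _) _; apply: HY.
Qed.


Lemma comm_bound (h : op) (l1 l2 eta kap : R) :
  0 < eta -> eta <= l2 - l1 ->
  opnorm (commutator (embed1 i ((l1%:C)%C *: Pi + (l2%:C)%C *: (1%:M - Pi))) h) <= kap ->
  forall w, ns ((pinch i Pi h - h) *m w) <= (kap / eta) ^+ 2 * ns w.
Proof.
move=> eta0 etaD hk w.
rewrite embed1D !embed1Z -/P -/Q in hk.
set Rr := _ *: P + _ *: Q in hk.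
set Cm := commutator Rr h in hk.
have hC := scale_bound (opnorm_le hk).
have PR : P *m Rr = (l1%:C)%C *: P.
  by rewrite /Rr mulmxDr -!scalemxAr PP PQ scaler0 addr0.
have RQ : Rr *m Q = (l2%:C)%C *: Q.
  by rewrite /Rr mulmxDl -!scalemxAl QQ PQ scaler0 add0r.
have QR : Q *m Rr = (l2%:C)%C *: Q.
  by rewrite /Rr mulmxDr -!scalemxAr QQ QP scaler0 add0r.
have RP : Rr *m P = (l1%:C)%C *: P.
  by rewrite /Rr mulmxDl -!scalemxAl PP QP scaler0 addr0.
have hdec : h = P *m h *m P + P *m h *m Q + Q *m h *m P + Q *m h *m Q.
  by rewrite -{1}(mul1mx h) -{1}(mulmx1 h) -PQ1 mulmxDl !mulmxDr !mulmxA !addrA.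
have hpin : pinch i Pi h - h = - (P *m h *m Q + Q *m h *m P).
  by rewrite /pinch -/P -/Q {3}hdec zmod4.
have key : ((l2 - l1)%:C)%C *: (pinch i Pi h - h) = P *m Cm *m Q - Q *m Cm *m P.
  have e1 : P *m (Rr *m h) *m Q = (l1%:C)%C *: (P *m h *m Q).
    by rewrite (mulmxA P Rr h) PR -!scalemxAl.
  have e2 : P *m (h *m Rr) *m Q = (l2%:C)%C *: (P *m h *m Q).
    by rewrite -(mulmxA P) -(mulmxA h Rr Q) RQ -!scalemxAr (mulmxA P h Q).
  have e3 : Q *m (Rr *m h) *m P = (l2%:C)%C *: (Q *m h *m P).
    by rewrite (mulmxA Q Rr h) QR -!scalemxAl.
  have e4 : Q *m (h *m Rr) *m P = (l1%:C)%C *: (Q *m h *m P).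
    by rewrite -(mulmxA Q) -(mulmxA h Rr P) RP -!scalemxAr (mulmxA Q h P).
  rewrite hpin /Cm /commutator (mulmxBr P) (mulmxBl (P *m _)) (mulmxBr Q) (mulmxBl (Q *m _)).
  by rewrite e1 e2 e3 e4 rmorphB /= lmod_id.
have h2 : (l2 - l1) ^+ 2 * ns ((pinch i Pi h - h) *m w) <= kap ^+ 2 * ns w.
  rewrite -ns_scale scalemxAl key mulmxBl -!mulmxA.
  rewrite -mulmxN ns_pyth ?hP ?hQ ?PQ ?QP // mulmxN nsN.
  rewrite [in leRHS]pyth1 mulrDr addrC; apply: lerD.
    by apply: le_trans (nsQ _) _; apply: hC.
  by apply: le_trans (nsP _) _; apply: hC.
set X := ns _ in h2 *; set s := ns w in h2 *.
have X0 : 0 <= X by apply: ns_ge0.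
have s0 : 0 <= s by apply: ns_ge0.
have e2 : eta ^+ 2 * X <= kap ^+ 2 * s.
  apply: le_trans h2; apply: ler_wpM2r => //.
  nra.
rewrite expr_div_n mulrAC ler_pdivlMr ?exprn_gt0 //.
by rewrite mulrC.
Qed.

End Fix.
End Cm.

End Aux.
Import Aux.
Unset Implicit Arguments.

Lemma pinchD (R : realType) (n : nat) (i : 'I_n) (Pi : 'M[R[i]]_2) (X Y : op R n) :
  pinch i Pi (X + Y) = pinch i Pi X + pinch i Pi Y.
Proof. by rewrite /pinch !mulmxDr !mulmxDl addrACA. Qed.

Lemma PmapD (R : realType) (n : nat) pin (Pm : 'I_n -> 'M[R[i]]_2) (i : 'I_n) (X Y : op R n) :
  Pmap pin Pm i (X + Y) = Pmap pin Pm i X + Pmap pin Pm i Y.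
Proof. by rewrite /Pmap; case: (pin i); rewrite ?pinchD. Qed.

Theorem lemma5p2 (R : realType) (n : nat)
  (E : rel 'I_n) (h : 'I_n -> 'I_n -> op R n)
  (eta kappa : 'I_n -> R)
  (pin : 'I_n -> bool) (Rm Pm : 'I_n -> 'M[R[i]]_2) (lmin lmax : 'I_n -> R) :
  (* E is a set of unordered pairs {i,j}, i <> j, with one term h_{ij} each *)
  (forall i j, E i j = E j i) ->
  (forall i, ~~ E i i) ->
  (forall i j, E i j -> h i j = h j i) ->
  (forall i j, E i j -> is_hermitian (h i j) /\ acts_only_on (i |: [set j])%SET (h i j)) ->
  (forall i, 0 < eta i) ->
  (forall i, 0 <= kappa i) ->
  (forall i, pin i ->
     [/\ spectral_decomp (Rm i) (Pm i) (lmin i) (lmax i),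
         eta i <= spectral_gap (lmin i) (lmax i) &
         forall j, E i j ->
           opnorm (commutator (embed1 i (Rm i)) (h i j)) <= kappa i]) ->
  (forall i, pin i -> forall j k, E i j -> E i k ->
     commutator (hprime pin Pm h i j) (hprime pin Pm h i k) = 0 /\
     commutator (hprime pin Pm h i j) (embed1 i (Rm i)) = 0) /\
  (forall i j, E i j ->
     opnorm (hprime pin Pm h i j - h i j)
       <= 4%:R * (kappa i / eta i + kappa j / eta j)).
Proof.
move=> Esym Eirr hsym hH eta0 kap0 hpin.
have actsP : forall i j, E i j -> acts_only_on (i |: [set j])%SET (Pmap pin Pm j (h i j)).
  move=> i j Eij; have [_ HA] := hH i j Eij.
  rewrite /Pmap; case: (pin j) => //; rewrite /pinch.
  have jS : j \in (i |: [set j])%SET by rewrite !inE eqxx orbT.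
  by apply: acts_add; apply: acts_sand.
split.
  move=> i pi j k Eij Eik.
  have [[PiPi Pih Pirk lle RmE] etaD hk] := hpin i pi.
  have hPi : forall X, Pmap pin Pm i X = pinch i (Pm i) X by move=> X; rewrite /Pmap pi.
  rewrite /hprime !hPi.
  split.
    case: (eqVneq j k) => [<-|jk]; first by rewrite /commutator subrr.
    rewrite /commutator (pinch_comm PiPi Pirk (actsP _ _ Eij) (actsP _ _ Eik)) ?subrr //.
    - by rewrite !inE eqxx.
    - by rewrite !inE eqxx.
    move=> k'; rewrite !inE; case: (k' == i) => //= /eqP -> /eqP e.
    by rewrite e eqxx in jk.
  by rewrite RmE /commutator pinch_commR ?subrr.
move=> i j Eij.
set h0 := h i j.
have ki0 : 0 <= kappa i / eta i by apply: divr_ge0; [apply: kap0 | apply: ltW].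
have kj0 : 0 <= kappa j / eta j by apply: divr_ge0; [apply: kap0 | apply: ltW].
have bnd : forall a b, E a b -> h a b = h0 -> forall w,
    ns ((Pmap pin Pm a h0 - h0) *m w) <= (kappa a / eta a) ^+ 2 * ns w.
  move=> a b Eab hab w; rewrite /Pmap; case: (boolP (pin a)) => pa; last first.
    by rewrite subrr mul0mx ns0 mulr_ge0 ?sqr_ge0 ?ns_ge0.
  have [[PiPi Pih Pirk lle RmE] etaD hk] := hpin a pa.
  move: (hk b Eab); rewrite RmE hab => hk'.
  exact: (comm_bound PiPi Pih (eta0 a) etaD hk').
have bi := bnd i j Eij erefl.
have bj : forall w, ns ((Pmap pin Pm j h0 - h0) *m w) <= (kappa j / eta j) ^+ 2 * ns w.
  apply: (bnd j i); first by rewrite Esym.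
  by rewrite /h0 (hsym _ _ Eij).
set Y := Pmap pin Pm j h0 - h0.
have bY : forall w, ns (Pmap pin Pm i Y *m w) <= (kappa j / eta j) ^+ 2 * ns w.
  rewrite /Pmap; case: (boolP (pin i)) => pa; last exact: bj.
  have [[PiPi Pih Pirk lle RmE] etaD hk] := hpin i pa.
  by apply: pinch_contract => //; rewrite sqr_ge0.
have -> : hprime pin Pm h i j - h i j = Pmap pin Pm i Y + (Pmap pin Pm i h0 - h0).
  by rewrite /hprime -/h0 -{1}(subrK h0 (Pmap pin Pm j h0)) -/Y PmapD addrA.
apply: opnorm_bound; first by rewrite mulr_ge0 ?addr_ge0.
move=> v hv; rewrite mulmxDl; apply: le_trans (ns_add _ _) _.
have := bY v; have := bi v; have := ns_ge0 v.
set a := kappa i / eta i; set b := kappa j / eta j.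
set x := ns (_ *m v); set y := ns (_ *m v); set s := ns v.
move=> s0 hx hy.
have ha : a ^+ 2 * s <= a ^+ 2 by rewrite ler_piMr ?sqr_ge0.
have hb : b ^+ 2 * s <= b ^+ 2 by rewrite ler_piMr ?sqr_ge0.
have hab := mulr_ge0 ki0 kj0.
apply: (@le_trans _ _ (2 * a ^+ 2 + 2 * b ^+ 2)); first lra.
rewrite -subr_ge0.
have -> : (4 * (a + b)) ^+ 2 - (2 * a ^+ 2 + 2 * b ^+ 2) = 14 * a ^+ 2 + 14 * b ^+ 2 + 32 * (a * b) by ring.
apply: addr_ge0; first apply: addr_ge0.
- by apply: mulr_ge0; [rewrite ler0n | exact: sqr_ge0].
- by apply: mulr_ge0; [rewrite ler0n | exact: sqr_ge0].
- by apply: mulr_ge0; [rewrite ler0n | exact: hab].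
Qed.
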